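(* For every integer $m\ge 4$ with $m\ne 5$, $\chi_{ei}(C_m\square C_7)=4$.
   Context: All graphs are finite and simple. $C_k$ denotes the cycle on $k$ vertices. A path $P_4$ in $G$ is a sequence $uxyv$ of four distinct vertices with $ux,xy,yv\in E(G)$; $u,v$ are its end vertices. An $e$-injective $k$-coloring of $G$ is a function $f:V(G)\to\{1,\dots,k\}$ with $f(u)\ne f(v)$ whenever $u,v$ are the end vertices of some path $P_4$ in $G$; $\chi_{ei}(G)$ is the least such $k$. In the Cartesian product $G\square H$ two vertices are adjacent if they are adjacent in one coordinate and equal in the other. *)

(* Defs.v *)
From mathcomp Require Import all_boot.
Set Implicit Arguments. Unset Strict Implicit. Unset Printing Implicit Defensive.

(* A simple graph on a finite vertex type T is given by an adjacency
   relation adj : rel T (assumed symmetric and irreflexive where needed). *)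

(* The cycle C_k on vertex set 'I_k (meaningful for k >= 3):
   i ~ j iff j = i+1 mod k or i = j+1 mod k. *)
Definition cycle_adj (k : nat) : rel 'I_k :=
  fun i j => (j == (i.+1 %% k) :> nat) || (i == (j.+1 %% k) :> nat).

Arguments cycle_adj : clear implicits.

Definition cart_adj (T U : finType) (g : rel T) (h : rel U) : rel (T * U) :=
  fun p q => (g p.1 q.1 && (p.2 == q.2)) || ((p.1 == q.1) && h p.2 q.2).

Definition P4_ends (T : finType) (adj : rel T) (u v : T) : bool :=
  [exists x : T, exists y : T,
     [&& uniq [:: u; x; y; v], adj u x, adj x y & adj y v]].

(* e-injective k-colouring: colours in {1..k}, represented by 'I_k. *)
Definition ei_coloring (T : finType) (adj : rel T) (k : nat) (f : T -> 'I_k) : bool :=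
  [forall u, forall v, P4_ends adj u v ==> (f u != f v)].

Definition ei_colorable (T : finType) (adj : rel T) (k : nat) : bool :=
  [exists f : {ffun T -> 'I_k}, ei_coloring adj f].

Lemma ex_ei_colorable (T : finType) (adj : rel T) :
  exists k, ei_colorable adj k.
Proof.
exists #|T|; apply/existsP; exists (finfun (@enum_rank T)).
apply/forallP => u; apply/forallP => v; apply/implyP.
move=> /existsP [x /existsP [y /and4P [Hu _ _ _]]].
rewrite !ffunE; apply/negP => /eqP /enum_rank_inj Huv; move: Hu; rewrite Huv /=.
by rewrite !inE eqxx !orbT.
Qed.

Definition chi_ei (T : finType) (adj : rel T) : nat :=
  ex_minn (ex_ei_colorable adj).

(* Main.v *)
Require Import Defs.
From mathcomp Require Import all_boot zify.
Set Implicit Arguments. Unset Strict Implicit. Unset Printing Implicit Defensive.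

Definition Aset : seq (nat * nat) :=
  [:: (0,1);(0,3);(0,4);(0,6);(1,0);(1,2);(1,5);(2,1);(2,6);(3,0)].

Definition Wd (t : seq (seq nat)) : bool :=
  all (fun j => (nth 0 (nth [::] t 0) j < 4) &&
     all (fun ky => nth 0 (nth [::] t 0) j != nth 0 (nth [::] t ky.1) ((j + ky.2) %% 7)) Aset)
    (iota 0 7).

Definition ext (s : seq (seq nat)) := s ++ take 3 s.
Definition win (s : seq (seq nat)) i := map (fun k => nth [::] (ext s) (i + k)) (iota 0 4).
Definition windows s := map (win s) (iota 0 (size s)).

Lemma ext_cat1 (s1 s2 : seq (seq nat)) n : 3 <= size s1 -> 3 <= size s2 ->
  take 3 s1 = take 3 s2 -> n < size s1 + 3 ->
  nth [::] (ext (s1 ++ s2)) n = nth [::] (ext s1) n.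
Proof.
move=> h1 h2 ht hn; rewrite /ext -catA !nth_cat.
case: ltnP => // hn2.
have hn3 : n - size s1 < 3 by lia.
rewrite (leq_trans hn3 h2) ht nth_take //.
Qed.

Lemma ext_cat2 (s1 s2 : seq (seq nat)) n : 3 <= size s1 -> 3 <= size s2 ->
  take 3 s1 = take 3 s2 ->
  nth [::] (ext (s1 ++ s2)) (size s1 + n) = nth [::] (ext s2) n.
Proof.
move=> h1 h2 ht; rewrite /ext -catA nth_cat ltnNge leq_addr /= addKn.
rewrite take_cat; case: ifP => h; first by rewrite ht.
have e : size s1 = 3 by lia.
by rewrite e subnn take0 cats0 -ht take_oversize ?e.
Qed.

Lemma windows_cat (s1 s2 : seq (seq nat)) : 3 <= size s1 -> 3 <= size s2 ->
  take 3 s1 = take 3 s2 -> windows (s1 ++ s2) = windows s1 ++ windows s2.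
Proof.
move=> h1 h2 ht; rewrite /windows size_cat iotaD map_cat; congr (_ ++ _).
  apply/eq_in_map => i; rewrite mem_iota add0n => hi.
  rewrite /win; apply/eq_in_map => k; rewrite mem_iota add0n => hk.
  by apply: ext_cat1 => //; lia.
rewrite add0n -[X in iota X _]addn0 iotaDl -map_comp; apply/eq_map => i /=.
rewrite /win; apply/eq_map => k; by rewrite -addnA ext_cat2.
Qed.

Lemma win_nth (w : seq (seq nat)) i k : 3 <= size w -> i < size w -> k <= 3 ->
  nth [::] w ((i + k) %% size w) = nth [::] (ext w) (i + k).
Proof.
move=> h3 hi hk; rewrite /ext nth_cat.
case: (ltnP (i + k) (size w)) => h.
  by rewrite modn_small.
have -> : i + k = (i + k - size w) + size w by lia.
rewrite modnDr modn_small; last by lia.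
by rewrite addnK nth_take //; lia.
Qed.

Definition c0 := [:: 0;1;0;1;2;3;2].
Definition c1 := [:: 1;0;1;0;3;2;3].
Definition c2 := [:: 0;1;0;3;2;3;1].
Definition c3 := [:: 1;0;3;2;3;1;0].
Definition c4 := [:: 2;3;2;3;1;0;1].
Definition c5 := [:: 3;2;3;1;0;1;2].
Definition c6 := [:: 2;3;1;0;1;2;3].
Definition B4 := [:: c0;c1;c2;c1].
Definition B6 := [:: c0;c1;c2;c1;c0;c1].
Definition B7 := [:: c0;c1;c2;c3;c4;c5;c6].
Definition B9 := [:: c0;c1;c2;c1;c2;c3;c4;c5;c6].

Lemma WB4 : all Wd (windows B4). Proof. by vm_compute. Qed.
Lemma WB6 : all Wd (windows B6). Proof. by vm_compute. Qed.
Lemma WB7 : all Wd (windows B7). Proof. by vm_compute. Qed.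
Lemma WB9 : all Wd (windows B9). Proof. by vm_compute. Qed.

Definition rep a := flatten (nseq a B4).

Lemma size_rep a : size (rep a) = 4 * a.
Proof. elim: a => // a; rewrite /rep /= => ->; lia. Qed.

Lemma rep_S a : rep a.+1 = B4 ++ rep a. Proof. by []. Qed.

Lemma take_rep a : take 3 (rep a.+1) = take 3 B4.
Proof. by rewrite rep_S. Qed.

Lemma W_rep a : all Wd (windows (rep a.+1)).
Proof.
elim: a => [|a IH]; first by rewrite rep_S cats0 WB4.
rewrite rep_S windows_cat ?all_cat ?WB4 ?IH ?size_rep ?take_rep //; lia.
Qed.

Definition word m :=
  rep ((m - nth 0 [:: 0;9;6;7] (m %% 4)) %/ 4) ++ nth [::] [:: [::]; B9; B6; B7] (m %% 4).

Lemma word_ok m : 4 <= m -> m != 5 -> size (word m) = m /\ all Wd (windows (word m)).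
Proof.
move=> h4 h5; rewrite /word.
have hm : m %% 4 < 4 by rewrite ltn_mod.
case e: (m %% 4) hm => [|[|[|[|r]]]] // _ /=.
- have [a ea] : exists a, (m %/ 4) = a.+1 by exists (m %/ 4).-1; lia.
  rewrite subn0 ea cats0 W_rep size_rep; split => //; lia.
- set a := (m - 9) %/ 4.
  have sz : 4 * a + 9 = m by rewrite /a; lia.
  rewrite size_cat size_rep /=; split => //.
  case: a sz => [|a] sz; first exact: WB9.
  rewrite windows_cat ?all_cat ?WB9 ?W_rep ?size_rep ?take_rep //; lia.
- set a := (m - 6) %/ 4.
  have sz : 4 * a + 6 = m by rewrite /a; lia.
  rewrite size_cat size_rep /=; split => //.
  case: a sz => [|a] sz; first exact: WB6.
  rewrite windows_cat ?all_cat ?WB6 ?W_rep ?size_rep ?take_rep //; lia.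
- set a := (m - 7) %/ 4.
  have sz : 4 * a + 7 = m by rewrite /a; lia.
  rewrite size_cat size_rep /=; split => //.
  case: a sz => [|a] sz; first exact: WB7.
  rewrite windows_cat ?all_cat ?WB7 ?W_rep ?size_rep ?take_rep //; lia.
Qed.

Lemma nth_win w i k : k < 4 -> nth [::] (win w i) k = nth [::] (ext w) (i + k).
Proof. by move=> hk; rewrite /win (nth_map 0) ?size_iota // nth_iota. Qed.

Lemma Kcol (w : seq (seq nat)) i j k y : 3 <= size w -> all Wd (windows w) ->
  i < size w -> j < 7 -> (k, y) \in Aset ->
  (nth 0 (nth [::] w i) j < 4) &&
  (nth 0 (nth [::] w i) j != nth 0 (nth [::] w ((i + k) %% size w)) ((j + y) %% 7)).
Proof.
move=> h3 hW hi hj hky.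
have hk : k <= 3 by have : all (fun p => p.1 <= 3) Aset by []; move/allP/(_ _ hky).
move/allP: hW => /(_ (win w i)).
rewrite map_f ?mem_iota ?add0n // => /(_ isT) /allP /(_ j).
rewrite mem_iota add0n hj => /(_ isT) /andP [H1 /allP /(_ _ hky) H2].
have e0 : nth [::] w i = nth [::] (win w i) 0 by rewrite nth_win // addn0 /ext nth_cat hi.
rewrite e0 H1 /= win_nth //.
have hk4 : k < 4 by lia.
by move: H2; rewrite /= !nth_win.
Qed.

Definition colr m (p : 'I_m * 'I_7) : 'I_4 := inord (nth 0 (nth [::] (word m) p.1) p.2).

Lemma KF0 m (u v : 'I_m * 'I_7) k y : 4 <= m -> m != 5 ->
  (v.1 : nat) = (u.1 + k) %% m -> (v.2 : nat) = (u.2 + y) %% 7 -> (k, y) \in Aset ->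
  colr u != colr v.
Proof.
move=> h4 h5 e1 e2 hky.
have [sz hW] := word_ok h4 h5.
have h3 : 3 <= size (word m) by lia.
have hu1 : u.1 < size (word m) by rewrite sz.
have hv1 : v.1 < size (word m) by rewrite sz.
have := Kcol h3 hW hu1 (ltn_ord u.2) hky.
have := Kcol h3 hW hv1 (ltn_ord v.2) (_ : (0,1) \in Aset).
case/(_ isT)/andP => hv _ /andP [hu hne].
rewrite sz in hne; rewrite /colr; apply/eqP => /(congr1 (@nat_of_ord _)).
rewrite !inordK // e1 e2 => E.
by rewrite E eqxx in hne.
Qed.

Lemma stepP m (p q : 'I_m * 'I_7) : 0 < m -> cart_adj (cycle_adj m) (cycle_adj 7) p q ->
  exists2 s : nat * nat, s \in [:: (1,0); (m-1,0); (0,1); (0,6)] &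
    ((q.1:nat) = (p.1 + s.1) %% m /\ (q.2:nat) = (p.2 + s.2) %% 7).
Proof.
move=> hm; rewrite /cart_adj /cycle_adj => /orP[/andP[/orP[]/eqP e /eqP e2]|/andP[/eqP e1 /orP[]/eqP e]].
- exists (1,0); first by rewrite !inE eqxx.
  by split; [rewrite e addn1 | rewrite e2 addn0 modn_small].
- exists (m-1,0); first by rewrite !inE eqxx ?orbT.
  split; last by rewrite e2 addn0 modn_small.
  rewrite e modnDml /=; have -> : (q.1).+1 + (m-1) = q.1 + m by lia.
  by rewrite modnDr modn_small.
- exists (0,1); first by rewrite !inE eqxx ?orbT.
  by split; [rewrite e1 addn0 modn_small | rewrite e addn1].
- exists (0,6); first by rewrite !inE eqxx ?orbT.
  split; first by rewrite e1 addn0 modn_small.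
  rewrite e modnDml /=; have -> : (q.2).+1 + 6 = q.2 + 7 by lia.
  by rewrite modnDr modn_small.
Qed.

Lemma KF m (u v : 'I_m * 'I_7) E1 E2 k t : 4 <= m -> m != 5 ->
  E1 = k + t * m -> (k, E2 %% 7) \in Aset ->
  (v.1 : nat) = (u.1 + E1) %% m -> (v.2 : nat) = (u.2 + E2) %% 7 -> colr u != colr v.
Proof.
move=> h4 h5 eE hA e1 e2; apply: (KF0 (k:=k) (y:=E2 %% 7)) => //.
  by rewrite e1 eE addnA -modnDmr modnMl addn0.
by rewrite e2 modnDmr.
Qed.

Lemma KB m (u v : 'I_m * 'I_7) E1 E2 k t : 4 <= m -> m != 5 ->
  E1 + k = t * m -> (k, (21 - E2) %% 7) \in Aset -> E2 <= 21 ->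
  (v.1 : nat) = (u.1 + E1) %% m -> (v.2 : nat) = (u.2 + E2) %% 7 -> colr u != colr v.
Proof.
move=> h4 h5 eE hA hE e1 e2; rewrite eq_sym; apply: (KF0 (k:=k) (y:=(21 - E2) %% 7)) => //.
  by rewrite e1 modnDml -addnA eE -modnDmr modnMl addn0 modn_small.
by rewrite e2 modnDmr modnDml -addnA subnKC // -modnDmr addn0 modn_small.
Qed.

Ltac try_k h4 h5 V1 V2 K T :=
  first [ apply: (KF (k:=K) (t:=T) h4 h5 _ _ V1 V2); [lia | by []]
        | apply: (KB (k:=K) (t:=T) h4 h5 _ _ _ V1 V2); [lia | by [] | by []] ].
Ltac try_t h4 h5 V1 V2 K :=
  first [ try_k h4 h5 V1 V2 K 0 | try_k h4 h5 V1 V2 K 1 | try_k h4 h5 V1 V2 K 2 | try_k h4 h5 V1 V2 K 3 ].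
Ltac solve_case h4 h5 V1 V2 :=
  first [ try_t h4 h5 V1 V2 0 | try_t h4 h5 V1 V2 1 | try_t h4 h5 V1 V2 2 | try_t h4 h5 V1 V2 3 ].

Lemma upper m : 4 <= m -> m != 5 -> ei_colorable (cart_adj (cycle_adj m) (cycle_adj 7)) 4.
Proof.
move=> h4 h5; apply/existsP; exists [ffun p => colr p].
apply/forallP => u; apply/forallP => v; apply/implyP => /existsP[x /existsP[y /and4P[_ H1 H2 H3]]].
rewrite !ffunE.
have hm : 0 < m by lia.
case: (stepP hm H1) => s1 hs1 [ex1 ex2].
case: (stepP hm H2) => s2 hs2 [ey1 ey2].
case: (stepP hm H3) => s3 hs3 [ev1 ev2].
have V1 : (v.1:nat) = (u.1 + (s1.1 + s2.1 + s3.1)) %% m by rewrite ev1 ey1 ex1 modnDml -addnA modnDml !addnA.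
have V2 : (v.2:nat) = (u.2 + (s1.2 + s2.2 + s3.2)) %% 7 by rewrite ev2 ey2 ex2 modnDml -addnA modnDml !addnA.
move: V1 V2; clear -h4 h5 hs1 hs2 hs3; move: hs1 hs2 hs3.
rewrite !inE => /or4P[]/eqP-> /or4P[]/eqP-> /or4P[]/eqP-> /= V1 V2; solve_case h4 h5 V1 V2.
Qed.

Definition okf (a : nat -> nat) :=
  all (fun j => (a j != a ((j + 1) %% 7)) && (a j != a ((j + 3) %% 7))) (iota 0 7).

Lemma chk : all (fun a0 => all (fun a1 => all (fun a2 => all (fun a3 =>
  all (fun a4 => all (fun a5 => all (fun a6 =>
   ~~ okf (fun j => nth 0 [:: a0; a1; a2; a3; a4; a5; a6] j))
  (iota 0 3)) (iota 0 3)) (iota 0 3)) (iota 0 3)) (iota 0 3)) (iota 0 3)) (iota 0 3).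
Proof. by vm_compute. Qed.

Lemma ieq (x y : nat) : x < 7 -> y < 7 -> (inord x == inord y :> 'I_7) = (x == y).
Proof. by move=> hx hy; rewrite -val_eqE /= !inordK. Qed.

Lemma lower m k : 4 <= m -> k < 4 -> ~~ ei_colorable (cart_adj (cycle_adj m) (cycle_adj 7)) k.
Proof.
move=> h4 hk; apply/negP => /existsP [f /forallP Hf].
have conf : forall u v, P4_ends (cart_adj (cycle_adj m) (cycle_adj 7)) u v -> f u != f v.
  by move=> u v H; move: (Hf u) => /forallP /(_ v) /implyP; apply.
have hm0 : 0 < m by lia.
have hm1 : 1 < m by lia.
pose i0 := Ordinal hm0.
pose i1 := Ordinal hm1.
have A01 : cycle_adj m i0 i1 by rewrite /cycle_adj /= modn_small ?eqxx.
have n01 : (i0 == i1) = false by [].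
pose a j := nat_of_ord (f (i0, inord j)).
have ha : forall j, a j \in iota 0 3 by move=> j; rewrite mem_iota /=; have := ltn_ord (f (i0, inord j)); rewrite /a; lia.
have A10 : cycle_adj m i1 i0 by rewrite /cycle_adj /= (modn_small hm1) eqxx orbT.
have adjH : forall i (x y : 'I_7), cycle_adj 7 x y ->
    cart_adj (cycle_adj m) (cycle_adj 7) (i, x) (i, y).
  by move=> i x y hxy; rewrite /cart_adj /= eqxx hxy orbT.
have H1 : forall j, j < 7 -> a j != a ((j + 1) %% 7).
  move=> j hj; rewrite /a; apply/negP => /eqP /val_inj /eqP; apply/negP; apply: conf.
  apply/existsP; exists (i1, inord j); apply/existsP; exists (i1, inord ((j + 1) %% 7)).
  case: j hj => [|[|[|[|[|[|[|j]]]]]]] // _; apply/and4P; split;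
    try (by rewrite /cart_adj /= ?A01 ?A10 ?eqxx);
    try (by apply: adjH; rewrite /cycle_adj !inordK);
    by rewrite /= !inE !xpair_eqE n01 (eq_sym i1 i0) n01 /= !ieq.
have H3 : forall j, j < 7 -> a j != a ((j + 3) %% 7).
  move=> j hj; rewrite /a; apply/negP => /eqP /val_inj /eqP; apply/negP; apply: conf.
  apply/existsP; exists (i0, inord ((j + 1) %% 7)); apply/existsP; exists (i0, inord ((j + 2) %% 7)).
  case: j hj => [|[|[|[|[|[|[|j]]]]]]] // _; apply/and4P; split;
    try (by apply: adjH; rewrite /cycle_adj !inordK);
    by rewrite /= !inE !xpair_eqE eqxx /= !ieq.
have E : forall t, t < 7 -> nth 0 [:: a 0; a 1; a 2; a 3; a 4; a 5; a 6] t = a t.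
  by case => [|[|[|[|[|[|[|t]]]]]]].
have : okf (fun j => nth 0 [:: a 0; a 1; a 2; a 3; a 4; a 5; a 6] j).
  apply/allP => j; rewrite mem_iota add0n => /andP[_ hj].
  by rewrite !E ?ltn_mod // H1 ?H3.
have := chk.
move/allP/(_ (a 0) (ha 0))/allP/(_ (a 1) (ha 1))/allP/(_ (a 2) (ha 2))/allP/(_ (a 3) (ha 3)).
move/allP/(_ (a 4) (ha 4))/allP/(_ (a 5) (ha 5))/allP/(_ (a 6) (ha 6)).
by move/negP.
Qed.

Theorem theorem4p9 (m : nat) :
  4 <= m -> m != 5 ->
  chi_ei (cart_adj (cycle_adj m) (cycle_adj 7)) = 4.
Proof.
move=> h4 h5; rewrite /chi_ei; case: ex_minnP => n Hn Hmin.
apply/eqP; rewrite eqn_leq Hmin ?upper //=.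
rewrite leqNgt; apply/negP => hn.
by move: (lower h4 hn); rewrite Hn.
Qed.
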